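(* Let $W\in\mathbb{R}^{a\times b}$ with columns $w_1,\dots,w_b$, and let $\sigma:\mathbb{R}\to\mathbb{R}$ be positive-homogeneous ($\sigma(\alpha t)=\alpha\sigma(t)$ for all $\alpha\ge0$, $t\in\mathbb{R}$) and not identically zero. Let $z\sim\mathcal N(0,I_a)$. For each neuron $j$ define the activity score \[ s_j=\frac{\mathbb{E}_z[|\sigma(\langle z,w_j\rangle)|]}{\frac1b\sum_{k=1}^b\mathbb{E}_z[|\sigma(\langle z,w_k\rangle)|]}. \] If $\varepsilon:=\sqrt{\mathrm{DfI}(W)}<1$, then for all $j$, \[ \sqrt{\frac{1-\varepsilon}{1+\varepsilon}}\le s_j\le\sqrt{\frac{1+\varepsilon}{1-\varepsilon}}. \]
   Context: $\mathrm{DfI}(W)=\|W^\top W-I\|_F^2$ (Deviation from Isometry), with $\|\cdot\|_F$ the Frobenius norm. *)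

(* Defs.v *)
From HB Require Import structures.
From mathcomp Require Import all_boot all_order all_algebra.
From mathcomp Require Import all_classical all_reals all_analysis.
Set Implicit Arguments. Unset Strict Implicit. Unset Printing Implicit Defensive.
Import Order.TTheory GRing.Theory Num.Theory.
Local Open Scope ring_scope.

Definition DfI {R : realType} {a b : nat} (W : 'M[R]_(a, b)) : R :=
  \sum_(i < b) \sum_(k < b) ((W^T *m W - 1%:M) i k) ^+ 2.

(* By Tonelli, for nonnegative measurable f this is E_{z ~ N(0, I_n)}[f z]. *)
Fixpoint gauss_iter {R : realType} (n : nat)
    (f : (nat -> R) -> \bar R) : \bar R :=
  match n with
  | 0 => f (fun _ => 0)
  | n'.+1 => (\int[normal_prob (0:R) 1]_x
               gauss_iter n' (fun z => f (fun i => if i == n' then x else z i)))%E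
  end.

Definition gauss_expect {R : realType} (a : nat)
    (g : ('I_a -> R) -> \bar R) : \bar R :=
  gauss_iter a (fun z => g (fun i => z (nat_of_ord i))).

Definition pos_homogeneous {R : realType} (sigma : R -> R) : Prop :=
  forall alpha t : R, 0 <= alpha -> sigma (alpha * t) = alpha * sigma t.

Definition neuron_act {R : realType} {a b : nat} (sigma : R -> R)
    (W : 'M[R]_(a, b)) (j : 'I_b) : \bar R :=
  gauss_expect (fun z => (`| sigma (\sum_(i < a) z i * W i j) |)%:E).

Definition activity_score {R : realType} {a b : nat} (sigma : R -> R)
    (W : 'M[R]_(a, b)) (j : 'I_b) : R :=
  fine (neuron_act sigma W j) /
    ((b%:R)^-1 * \sum_(k < b) fine (neuron_act sigma W k)).

(* Main.v *)
Require Import Defs.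
From HB Require Import structures.
From mathcomp Require Import all_boot all_order all_algebra.
From mathcomp Require Import all_classical all_reals all_analysis.
From mathcomp Require Import measurable_realfun normal_distribution ring lra.
Import Order.TTheory GRing.Theory Num.Theory.
Local Open Scope ring_scope.
Import numFieldNormedType.Exports.
Section dens.
Local Open Scope ereal_scope.
Context {R : realType} (m s : R).
Notation mu := (@lebesgue_measure R).

Let integral_normal_indic (E : set R) : measurable E ->
  \int[normal_prob m s]_x (\1_E x)%:E =
  \int[mu]_x ((\1_E x)%:E * (normal_pdf m s x)%:E).
Proof.
move=> mE; rewrite integral_indic//= setIT /normal_prob integral_mkcond/=.
apply: eq_integral => x _; rewrite patchE indicE; case: ifPn => xE.
  by rewrite mul1e.
by rewrite mul0e.
Qed.

Import HBNNSimple.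

Let integral_normal_nnsfun (f : {nnsfun R >-> R}) :
  \int[normal_prob m s]_x (f x)%:E =
  \int[mu]_x ((f x)%:E * (normal_pdf m s x)%:E).
Proof.
under [LHS]eq_integral do rewrite fimfunE -fsumEFin//.
rewrite [LHS]ge0_integral_fsum//; last 2 first.
  - move=> r; apply/measurable_EFinP; apply: measurable_funM => //.
    by apply: measurable_indic; have := measurable_sfunP f (measurable_set1 r).
  - by move=> n x _; rewrite EFinM nnfun_muleindic_ge0.
under [RHS]eq_integral.
  move=> x xD; rewrite fimfunE -fsumEFin// ge0_mule_fsuml; last first.
    by move=> r; rewrite EFinM nnfun_muleindic_ge0.
  over.
rewrite [RHS]ge0_integral_fsum//; last 2 first.
  - move=> r; apply: emeasurable_funM; apply/measurable_EFinP.
      apply: measurable_funM => //; apply: measurable_indic.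
      by have := measurable_sfunP f (measurable_set1 r).
    exact: measurable_normal_pdf.
  - move=> n x _; rewrite -EFinM lee_fin mulr_ge0 ?normal_pdf_ge0//.
    by rewrite -lee_fin EFinM nnfun_muleindic_ge0.
apply: eq_fsbigr => r _.
under [RHS]eq_integral do rewrite EFinM -muleA.
have [r0|r0] := ltP r 0%R.
  rewrite integral0_eq; last by move=> x _; rewrite preimage_nnfun0// indic0 mulr0.
  by rewrite integral0_eq// => x _; rewrite preimage_nnfun0// indic0 mul0e mule0.
rewrite ge0_integralZl//.
- under eq_integral do rewrite EFinM.
  rewrite ge0_integralZl// ?integral_normal_indic//.
  all: try by have := measurable_sfunP f (measurable_set1 r).
  all: try by move=> x _; rewrite lee_fin.
  by apply/measurable_EFinP; apply: measurable_indic; have := measurable_sfunP f (measurable_set1 r).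
- apply: emeasurable_funM; apply/measurable_EFinP; last exact: measurable_normal_pdf.
  by apply: measurable_indic; have := measurable_sfunP f (measurable_set1 r).
- by move=> x _; rewrite mule_ge0// lee_fin ?normal_pdf_ge0.
Qed.

Lemma integral_normal (f : R -> \bar R) :
  measurable_fun setT f -> (forall x, 0 <= f x) ->
  \int[normal_prob m s]_x f x = \int[mu]_x (f x * (normal_pdf m s x)%:E).
Proof.
move=> mf f0.
pose f_ := nnsfun_approx measurableT mf.
transitivity (limn (fun n => \int[normal_prob m s]_x (f_ n x)%:E)).
  rewrite -monotone_convergence//=.
  - apply: eq_integral => x _; apply/esym; apply: cvg_lim; first exact: ereal_hausdorff.
    by apply: cvg_nnsfun_approx => // y _; exact: f0.
  - by move=> n; apply/measurable_EFinP; have := measurable_funPT (f_ n).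
  - by move=> n ? _; rewrite lee_fin.
  - move=> x _ a b ab; rewrite lee_fin.
    by have /lefP := nd_nnsfun_approx measurableT mf ab.
transitivity (limn (fun n => \int[mu]_x ((f_ n x)%:E * (normal_pdf m s x)%:E))); last first.
  rewrite -monotone_convergence//=.
  - apply: eq_integral => x _; apply: cvg_lim; first exact: ereal_hausdorff.
    apply: cvgeZr => //.
    by apply: cvg_nnsfun_approx => // y _; exact: f0.
  - move=> n; apply: emeasurable_funM.
      by apply/measurable_EFinP; have := measurable_funPT (f_ n).
    by apply/measurable_EFinP; exact: measurable_normal_pdf.
  - by move=> n x _; rewrite mule_ge0// lee_fin ?normal_pdf_ge0.
  - move=> x _ a b ab; rewrite lee_wpmul2r ?lee_fin ?normal_pdf_ge0//.
    by have /lefP := nd_nnsfun_approx measurableT mf ab.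
by congr (limn _); apply/funext => n; exact: integral_normal_nnsfun.
Qed.

End dens.
Section subst.
Local Open Scope ereal_scope.
Context {R : realType}.
Notation mu := (@lebesgue_measure R).

Lemma subst_affine (c e : R) (G : R -> R) : (0 < c)%R -> continuous G ->
  (forall x, 0 <= G x)%R ->
  \int[mu]_x (G x)%:E = \int[mu]_x (G ((x + e) * c) * c)%:E.
Proof.
move=> c0 cG G0.
pose F := fun x : R => ((x + e) * c)%R.
have F'E : F^`()%classic = cst c.
  apply/funext => x; rewrite /F derive1E deriveM// deriveD// derive_cst scaler0.
  by rewrite derive_id derive_cst addr0 scaler1 add0r.
rewrite (@increasing_ge0_integration_by_substitutionT _ F G)//.
- by apply: eq_integral => x _; rewrite F'E.
- by move=> x y xy; rewrite /F ltr_pM2r// ltrD2r.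
- by rewrite F'E => ?; exact: cvg_cst.
- by rewrite F'E; exact: is_cvg_cst.
- by rewrite F'E; exact: is_cvg_cst.
- by apply/gt0_cvgMlNy => //; exact: cvg_addrr_Ny.
- by apply/gt0_cvgMly => //; exact: cvg_addrr.
Qed.

End subst.
Section refl.
Local Open Scope ereal_scope.
Context {R : realType}.
Notation mu := (@lebesgue_measure R).

Lemma integral_reflect (g : R -> \bar R) : measurable_fun setT g ->
  (forall x, 0 <= g x) ->
  \int[mu]_x g (- x)%R = \int[mu]_x g x.
Proof.
move=> mg g0.
transitivity (\int[pushforward mu (-%R : R -> measurableTypeR R)]_x g x); last first.
  by apply: eq_measure_integral => //= A mA _; exact: lebesgue_measureN.
rewrite ge0_integral_pushforward//.
Qed.

End refl.
Section pdf.
Context {R : realType}.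
Let K : R := Num.sqrt (pi *+ 2).
Let K0 : (0 < K)%R.
Proof. by rewrite sqrtr_gt0 pmulrn_lgt0// pi_gt0. Qed.

Lemma pdfE' (m s x : R) : (0 < s)%R ->
  normal_pdf m s x = ((s * K)^-1 * expR (- (x - m)^+2 / (s^+2 *+ 2)))%R.
Proof.
move=> s0; rewrite /normal_pdf gt_eqF//= /normal_peak /normal_fun.
by rewrite -mulrnAr sqrtrM ?sqr_ge0// sqrtr_sqr gtr0_norm.
Qed.

Lemma pdf_scale (r v : R) : (0 < r)%R ->
  (normal_pdf 0 r (r * v) * r = normal_pdf 0 1 v)%R.
Proof.
move=> r0; rewrite !pdfE'//.
have -> : (- (r * v - 0) ^+ 2 / (r ^+ 2 *+ 2)) = (- (v - 0)^+2 / (1 ^+ 2 *+ 2)).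
  by field; rewrite gt_eqF.
by field; rewrite !gt_eqF.
Qed.

Lemma pdf_prod (r s t x : R) : (0 < r)%R ->
  (normal_pdf 0 r (t - s * x) * normal_pdf 0 1 x =
   normal_pdf 0 (Num.sqrt (r^+2 + s^+2)) t *
   normal_pdf (s * t / (r^+2 + s^+2)) (r / Num.sqrt (r^+2 + s^+2)) x)%R.
Proof.
move=> r0.
have P0 : (0 < r^+2 + s^+2)%R by rewrite ltr_wpDr ?sqr_ge0 ?exprn_gt0.
set P := (r^+2 + s^+2)%R in P0 *.
have rho0 : (0 < Num.sqrt P)%R by rewrite sqrtr_gt0.
have rho2 : (Num.sqrt P ^+ 2 = P)%R by rewrite sqr_sqrtr// ltW.
rewrite !pdfE'// ?divr_gt0//.
rewrite mulrACA [in RHS]mulrACA -!expRD.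
congr (_ * expR _).
  by field; rewrite !gt_eqF.
rewrite expr_div_n rho2 /P.
by field; rewrite !gt_eqF.
Qed.

End pdf.
Section twod.
Local Open Scope ereal_scope.
Context {R : realType}.
Notation mu := (@lebesgue_measure R).
Notation N := (normal_prob (0:R) 1).

Lemma twod_main (h : R -> R) (r s : R) : continuous h -> (forall x, 0 <= h x)%R ->
  (0 < r)%R ->
  \int[N]_x \int[N]_v (h (r * v + s * x))%:E =
  \int[N]_v (h (Num.sqrt (r^+2 + s^+2) * v))%:E.
Proof.
move=> cG h0 r0.
have P0 : (0 < r^+2 + s^+2)%R by rewrite ltr_wpDr ?sqr_ge0 ?exprn_gt0.
have rho0 : (0 < Num.sqrt (r^+2 + s^+2))%R by rewrite sqrtr_gt0.
set rho := Num.sqrt (r^+2 + s^+2) in rho0 *.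
have mh : measurable_fun setT h by exact: continuous_measurable_fun.
have inner x : \int[N]_v (h (r * v + s * x))%:E =
    \int[mu]_t (h t * normal_pdf 0 r (t - s * x))%:E.
  rewrite integral_normal; last 2 first.
  - apply/measurable_EFinP; apply: measurableT_comp => //.
    by apply: measurable_funD => //; apply: measurable_funM.
  - by move=> v; rewrite lee_fin.
  rewrite [RHS](@subst_affine _ r (s * x / r)) //; last 2 first.
  - move=> t; apply: cvgM; first exact: cG.
    apply: (@continuous_comp _ _ _ (fun t => t - s * x)%R (normal_pdf 0 r) t).
      by apply: cvgB; [exact: cvg_id|exact: cvg_cst].
    exact: continuous_normal_pdf (lt0r_neq0 r0) _.
  - by move=> t; rewrite mulr_ge0 ?normal_pdf_ge0.
  apply: eq_integral => v _; rewrite -EFinM; congr EFin.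
  have -> : ((v + s * x / r) * r - s * x = r * v)%R by field; rewrite gt_eqF.
  have -> : ((v + s * x / r) * r = r * v + s * x)%R by field; rewrite gt_eqF.
  by rewrite -mulrA pdf_scale.
transitivity (\int[N]_x \int[mu]_t (h t * normal_pdf 0 r (t - s * x))%:E).
  by apply: eq_integral => x _; exact: inner.
pose k := fun z : (measurableTypeR R * measurableTypeR R)%type =>
  (h z.2 * normal_pdf 0 r (z.2 - s * z.1))%:E.
have mk : measurable_fun setT k.
  apply/measurable_EFinP; apply: measurable_funM.
    exact: measurableT_comp mh measurable_snd.
  apply: measurableT_comp (measurable_normal_pdf 0 r) _.
  by apply: measurable_funB => //; apply: measurable_funM.
have k0 z : 0 <= k z by rewrite lee_fin mulr_ge0 ?normal_pdf_ge0.
have mPhi := @measurable_fun_fubini_tonelli_F _ _ _ _ _ mu k mk k0.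
rewrite integral_normal; last 2 first.
  - by have := mPhi.
  - by move=> x; apply: integral_ge0 => t _; rewrite lee_fin mulr_ge0 ?normal_pdf_ge0.
pose f := fun z : (measurableTypeR R * measurableTypeR R)%type =>
  (h z.2 * normal_pdf 0 r (z.2 - s * z.1) * normal_pdf 0 1 z.1)%:E.
have mf : measurable_fun setT f.
  apply/measurable_EFinP; apply: measurable_funM; last first.
    exact: measurableT_comp (measurable_normal_pdf 0 1) measurable_fst.
  apply: measurable_funM.
    exact: measurableT_comp mh measurable_snd.
  apply: measurableT_comp (measurable_normal_pdf 0 r) _.
  by apply: measurable_funB => //; apply: measurable_funM.
have f0 z : 0 <= f z by rewrite lee_fin !mulr_ge0 ?normal_pdf_ge0.
transitivity (\int[mu]_x \int[mu]_t f (x, t)).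
  apply: eq_integral => x _; rewrite -ge0_integralZr//; last 3 first.
  - by apply/measurable_EFinP; apply: measurable_funM => //;
      apply: measurableT_comp (measurable_normal_pdf 0 r) _; exact: measurable_funB.
  - by move=> t _; rewrite lee_fin mulr_ge0 ?normal_pdf_ge0.
  - by rewrite lee_fin normal_pdf_ge0.
rewrite (fubini_tonelli f mf f0).
transitivity (\int[mu]_t (h t * normal_pdf 0 rho t)%:E).
  apply: eq_integral => t _; rewrite /f /=.
  under eq_integral do rewrite -mulrA pdf_prod// mulrA EFinM.
  rewrite ge0_integralZl//; last 3 first.
  - by apply/measurable_EFinP; exact: measurable_normal_pdf.
  - by move=> x _; rewrite lee_fin normal_pdf_ge0.
  - by rewrite lee_fin mulr_ge0 ?normal_pdf_ge0.
  by rewrite integral_normal_pdf mule1.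
rewrite integral_normal; last 2 first.
  - by apply/measurable_EFinP; apply: measurableT_comp => //; apply: measurable_funM.
  - by move=> v; rewrite lee_fin.
have := @subst_affine _ rho 0 (fun t => h t * normal_pdf 0 rho t)%R rho0.
rewrite /= => ->; last 2 first.
  - move=> t; apply: cvgM; first exact: cG.
    exact: continuous_normal_pdf (lt0r_neq0 rho0) _.
  - by move=> t; rewrite mulr_ge0 ?normal_pdf_ge0.
apply: eq_integral => v _; rewrite addr0 (mulrC v) -EFinM; congr EFin.
by rewrite -mulrA pdf_scale.
Qed.

End twod.
Section twod2.
Local Open Scope ereal_scope.
Context {R : realType}.
Notation mu := (@lebesgue_measure R).
Notation N := (normal_prob (0:R) 1).

Lemma normal_pdfN (x : R) : normal_pdf 0 1 (- x) = normal_pdf 0 1 x.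
Proof. by rewrite !pdfE'// !subr0 sqrrN. Qed.

Lemma normal_sym (g : R -> \bar R) : measurable_fun setT g -> (forall x, 0 <= g x) ->
  \int[N]_x g (- x)%R = \int[N]_x g x.
Proof.
move=> mg g0.
rewrite integral_normal//; last first.
  by apply: (measurableT_comp mg).
rewrite integral_normal//.
rewrite -[RHS](@integral_reflect _ (fun x => g x * (normal_pdf 0 1 x)%:E)); last 2 first.
  - apply: emeasurable_funM => //; apply/measurable_EFinP; exact: measurable_normal_pdf.
  - by move=> x; rewrite mule_ge0// lee_fin normal_pdf_ge0.
by apply: eq_integral => x _; rewrite normal_pdfN.
Qed.

Lemma twod (h : R -> R) (r s : R) : continuous h -> (forall x, 0 <= h x)%R ->
  (0 <= r)%R ->
  \int[N]_x \int[N]_v (h (r * v + s * x))%:E =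
  \int[N]_v (h (Num.sqrt (r^+2 + s^+2) * v))%:E.
Proof.
move=> cG h0; rewrite le_eqVlt => /orP[/eqP r0|r0]; last exact: twod_main.
subst r.
have mh : measurable_fun setT h by exact: continuous_measurable_fun.
transitivity (\int[N]_x (h (s * x))%:E).
  apply: eq_integral => x _.
  under eq_integral do rewrite mul0r add0r.
  rewrite integral_cst//.
  rewrite [X in _ * X](_ : _ = 1) ?mule1//.
  exact: integral_normal_pdf.
rewrite expr0n /= add0r sqrtr_sqr.
have [s0|s0] := leP 0%R s; first by rewrite ger0_norm.
rewrite ltr0_norm// -normal_sym; last 2 first.
  - by apply/measurable_EFinP; apply: measurableT_comp => //; apply: measurable_funM.
  - by move=> v; rewrite lee_fin.
by apply: eq_integral => x _; rewrite mulrN mulNr.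
Qed.

End twod2.
Section iter.
Local Open Scope ereal_scope.
Context {R : realType}.
Notation N := (normal_prob (0:R) 1).

Lemma gauss_iter_lin (n : nat) (w : nat -> R) (h : R -> R) :
  continuous h -> (forall x, 0 <= h x)%R ->
  gauss_iter n (fun z => (h (\sum_(i < n) z i * w i))%:E) =
  \int[N]_v (h (Num.sqrt (\sum_(i < n) w i ^+ 2) * v))%:E.
Proof.
elim: n h => [|n IH] h cG h0 /=.
  rewrite !big_ord0 sqrtr0.
  under eq_integral do rewrite mul0r.
  rewrite integral_cst//.
  rewrite [X in _ * X](_ : _ = 1) ?mule1//.
  exact: integral_normal_pdf.
have S0 : (0 <= \sum_(i < n) w i ^+ 2)%R by apply: sumr_ge0 => i _; exact: sqr_ge0.
transitivity (\int[N]_x \int[N]_v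
    (h (Num.sqrt (\sum_(i < n) w i ^+ 2) * v + w n * x))%:E).
  apply: eq_integral => x _.
  rewrite -(IH (fun t => h (t + w n * x)%R)); last 2 first.
  - move=> t; apply: (@continuous_comp _ _ _ (fun t => t + w n * x)%R h t).
      by apply: cvgD; [exact: cvg_id|exact: cvg_cst].
    exact: cG.
  - by move=> t; exact: h0.
  congr (gauss_iter n _); apply/funext => z /=; congr (_%:E); congr (h _).
  rewrite big_ord_recr /= eqxx; congr (_ + _)%R; last by rewrite mulrC.
  by apply: eq_bigr => i _; rewrite /= ltn_eqF.
rewrite twod ?sqrtr_ge0// sqr_sqrtr// [in RHS]big_ord_recr.
by [].
Qed.

End iter.
Section Dbounds.
Local Open Scope ereal_scope.
Context {R : realType}.
Notation mu := (@lebesgue_measure R).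
Notation N := (normal_prob (0:R) 1).

Let K : R := Num.sqrt (pi *+ 2).
Let K0 : (0 < K)%R.
Proof. by rewrite sqrtr_gt0 pmulrn_lgt0// pi_gt0. Qed.

Lemma mnorm : measurable_fun setT (fun v : R => (`|v|)%:E).
Proof.
apply/measurable_EFinP; apply: continuous_measurable_fun.
exact: norm_continuous.
Qed.

Lemma abs_le_exp (v : R) : (`|v| <= expR (v ^+ 2 / 4))%R.
Proof.
apply: le_trans (expR_ge1Dx _).
rewrite -real_normK ?num_real//.
have := normr_ge0 v; set a := (`|v|)%R; move=> a0.
rewrite -subr_ge0 (_ : (1 + a ^+ 2 / 4 - a = (a / 2 - 1) ^+ 2)%R) ?sqr_ge0//.
by field.
Qed.

Lemma D_fin : \int[N]_v (`|v|)%:E < +oo.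
Proof.
rewrite integral_normal//; last exact: mnorm.
have s0 : (0 < Num.sqrt 2 :> R)%R by rewrite sqrtr_gt0.
apply: (@le_lt_trans _ _ (\int[mu]_v ((Num.sqrt 2) * normal_pdf 0 (Num.sqrt 2) v)%:E)).
  apply: ge0_le_integral => //.
  - by move=> v _; rewrite mule_ge0// lee_fin normal_pdf_ge0.
  - apply: emeasurable_funM; first exact: mnorm.
    by apply/measurable_EFinP; exact: measurable_normal_pdf.
  - apply/measurable_EFinP; apply: measurable_funM => //.
    exact: measurable_normal_pdf.
  move=> v _; rewrite -EFinM lee_fin.
  rewrite !pdfE'// sqr_sqrtr// !subr0.
  have -> : expR (- v ^+ 2 / (2 *+ 2)) = (expR (v^+2/4) * expR (- v ^+ 2 / (1 ^+ 2 *+ 2)))%R.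
    by rewrite -expRD; congr expR; field.
  have -> : (Num.sqrt 2 * ((Num.sqrt 2 * K)^-1 * (expR (v ^+ 2 / 4) * expR (- v ^+ 2 / (1 ^+ 2 *+ 2))))
     = K^-1 * (expR (v ^+ 2 / 4) * expR (- v ^+ 2 / (1 ^+ 2 *+ 2))))%R.
    by field; rewrite !gt_eqF.
  rewrite mul1r mulrCA ler_pM2l ?invr_gt0//.
  by rewrite ler_wpM2r ?expR_ge0// abs_le_exp.
under eq_integral do rewrite EFinM.
rewrite ge0_integralZl//; first by rewrite integral_normal_pdf mule1 ltry.
all: try (by apply/measurable_EFinP; exact: measurable_normal_pdf).
all: try (by move=> v _; rewrite lee_fin normal_pdf_ge0).
all: by rewrite lee_fin ltW.
Qed.

Lemma D_pos : 0 < \int[N]_v (`|v|)%:E.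
Proof.
rewrite integral_normal//; last exact: mnorm.
set c := normal_pdf (0:R) 1 2.
have c0 : (0 < c)%R by rewrite /c pdfE'// mulr_gt0 ?expR_gt0// invr_gt0 mulr_gt0.
apply: (@lt_le_trans _ _ (\int[mu]_v (c * \1_`[(1:R), 2]%classic v)%:E)).
  under eq_integral do rewrite EFinM.
  rewrite ge0_integralZl//; first last.
  all: try (by apply/measurable_EFinP; exact: measurable_indic).
  all: try (by move=> v _; rewrite lee_fin).
  all: try (by rewrite lee_fin ltW).
  rewrite integral_indic// setIT.
  rewrite [X in _ * X](_ : _ = (2 - 1)%:E); last first.
    by have := @lebesgue_measure_itv R `[1%R, 2%R]; rewrite /= lte_fin ltr1n.
  by rewrite -EFinM lte_fin mulr_gt0// subr_gt0 ltr1n.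
apply: ge0_le_integral => //.
- by move=> v _; rewrite lee_fin; apply: mulr_ge0; [exact: ltW|rewrite indicE; exact: ler0n].
- by apply/measurable_EFinP; apply: measurable_funM => //; exact: measurable_indic.
- apply: emeasurable_funM; first exact: mnorm.
  by apply/measurable_EFinP; exact: measurable_normal_pdf.
move=> v _; rewrite -EFinM lee_fin indicE.
case: (boolP (v \in _)) => [|_]; last by rewrite mulr0 mulr_ge0 ?normal_pdf_ge0.
rewrite inE /= in_itv /= => /andP[v1 v2].
rewrite mulr1 -[c]mul1r; apply: ler_pM => //; first exact: ltW.
  by rewrite ger0_norm// (le_trans _ v1).
rewrite /c !pdfE'// ler_pM2l ?invr_gt0 ?mulr_gt0// ler_expR !subr0.
rewrite ler_pM2r ?invr_gt0// lerN2.
nra.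
Qed.

End Dbounds.
Section final.
Context {R : realType}.
Notation N := (normal_prob (0:R) 1).

Lemma sigma_form (sigma : R -> R) : pos_homogeneous sigma ->
  forall t, sigma t = if 0 <= t then t * sigma 1 else (- t) * sigma (-1).
Proof.
move=> Hs t; case: ifP => t0; first by rewrite -Hs// mulr1.
by rewrite -Hs ?mulrN1 ?opprK// oppr_ge0 ltW// ltNge t0.
Qed.

Lemma h_form (sigma : R -> R) : pos_homogeneous sigma -> forall t,
  `|sigma t| = ((`|sigma 1| + `|sigma (-1)|) / 2) * `|t| +
               ((`|sigma 1| - `|sigma (-1)|) / 2) * t.
Proof.
move=> Hs t; rewrite (sigma_form sigma Hs); case: ifP => t0.
  by rewrite normrM ger0_norm//; field.
have tn : t < 0 by rewrite ltNge t0.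
by rewrite normrM (ltr0_norm tn) gtr0_norm ?oppr_gt0//; field.
Qed.

Lemma h_cont (a b : R) : continuous (fun t : R => a * `|t| + b * t).
Proof.
move=> x; apply: cvgD; apply: cvgM; try exact: cvg_cst.
  exact: norm_continuous.
exact: cvg_id.
Qed.

Lemma ratio_le (p q x y : R) : 0 < p -> 0 < y -> p <= x -> y <= q -> p / q <= x / y.
Proof.
move=> p0 y0 px yq.
have q0 : 0 < q by apply: lt_le_trans yq.
rewrite ler_pdivrMr// mulrAC ler_pdivlMr//.
nra.
Qed.

End final.
Section final2.
Context {R : realType}.
Notation N := (normal_prob (0:R) 1).
Local Notation Dint := (\int[N]_v (`|v|)%:E)%E.

Lemma C_val (sigma : R -> R) : pos_homogeneous sigma ->
  (\int[N]_v (`|sigma v|)%:E =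
   (((`|sigma 1| + `|sigma (-1)|) / 2) * fine Dint)%:E)%E.
Proof.
move=> Hs.
set A := (`|sigma 1| + `|sigma (-1)|) / 2.
set B := (`|sigma 1| - `|sigma (-1)|) / 2.
have hE := h_form sigma Hs; rewrite -/A -/B in hE.
have mh : measurable_fun setT (fun v => (`|sigma v|)%:E).
  apply/measurable_EFinP.
  rewrite (_ : (fun v => `|sigma v|) = fun t => A * `|t| + B * t).
    exact: continuous_measurable_fun (h_cont A B).
  by apply/funext => v; exact: hE.
have A0 : 0 <= A by rewrite divr_ge0// addr_ge0.
have Dfin : Dint \is a fin_num.
  by rewrite ge0_fin_numE ?D_fin// ltW// D_pos.
set C := (\int[N]_v (`|sigma v|)%:E)%E.
have sum : (C + C = (2 * A * fine Dint)%:E)%E.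
  rewrite {1}/C -(@normal_sym _ (fun v => (`|sigma v|)%:E))//;
    try by move=> v; rewrite lee_fin.
  rewrite /C -ge0_integralD//; try by move=> v _; rewrite lee_fin.
  all: try by apply: (measurableT_comp mh).
  rewrite EFinM fineK//.
  transitivity (\int[N]_v ((2 * A)%:E * (`|v|)%:E))%E.
    apply: eq_integral => v _; rewrite -EFinD -EFinM !hE normrN; congr EFin.
    ring.
  rewrite ge0_integralZl//; try exact: mnorm.
  all: try by move=> v _; rewrite lee_fin.
  all: try by rewrite lee_fin mulr_ge0.
have C0 : (0 <= C)%E by apply: integral_ge0 => v _; rewrite lee_fin.
move: sum C0; case: C => [c| |]//.
  move=> /= [] cE _; congr EFin; lra.
Qed.

Lemma nact (sigma : R -> R) (a b : nat) (W : 'M[R]_(a.+1, b)) (k : 'I_b) :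
  pos_homogeneous sigma ->
  neuron_act sigma W k =
  (Num.sqrt (\sum_(i < a.+1) W i k ^+ 2) *
   (((`|sigma 1| + `|sigma (-1)|) / 2) * fine Dint))%:E.
Proof.
move=> Hs.
set A := (`|sigma 1| + `|sigma (-1)|) / 2.
set B := (`|sigma 1| - `|sigma (-1)|) / 2.
have hE := h_form sigma Hs; rewrite -/A -/B in hE.
have cont : continuous (fun t => `|sigma t|).
  rewrite (_ : (fun v => `|sigma v|) = fun t => A * `|t| + B * t).
    exact: h_cont.
  by apply/funext => v; exact: hE.
have := gauss_iter_lin a.+1 (fun i => W (inord i) k) (fun t => `|sigma t|) cont (fun x => normr_ge0 _).
move=> E.
rewrite /neuron_act /gauss_expect.
transitivity (gauss_iter a.+1 (fun z : nat -> R =>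
    (`|sigma (\sum_(i < a.+1) z i * W (inord i) k)|)%:E)).
  congr (gauss_iter _ _); apply/funext => z; congr (_%:E); congr (`|sigma _|).
  by apply: eq_bigr => i _; rewrite inord_val.
etransitivity; first exact: E.
cbv beta.
have r0 : 0 <= Num.sqrt (\sum_(i < a.+1) W (inord i) k ^+ 2) by exact: sqrtr_ge0.
under eq_integral do rewrite (Hs _ _ r0) normrM (ger0_norm r0) EFinM.
rewrite ge0_integralZl//; try by move=> v _; rewrite lee_fin.
all: try by rewrite lee_fin.
all: try by apply/measurable_EFinP; apply: continuous_measurable_fun; exact: cont.
rewrite C_val// -EFinM; congr (EFin (Num.sqrt _ * _)).
by apply: eq_bigr => i _; rewrite inord_val.
Qed.

End final2.
Lemma diag_bound {R : realType} {a b : nat} (W : 'M[R]_(a, b)) (k : 'I_b) :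
  `|\sum_(i < a) W i k ^+ 2 - 1| <= Num.sqrt (DfI W).
Proof.
have -> : (\sum_(i < a) W i k ^+ 2 - 1) = (W^T *m W - 1%:M) k k.
  rewrite !mxE eqxx mulr1n; congr (_ - _).
  by apply: eq_bigr => i _; rewrite !mxE expr2.
have D0 : 0 <= DfI W.
  by apply: sumr_ge0 => i _; apply: sumr_ge0 => l _; exact: sqr_ge0.
rewrite -sqrtr_sqr ler_sqrt//.
rewrite /DfI (bigD1 k)//= (bigD1 k)//= -addrA lerDl.
by apply: addr_ge0; apply: sumr_ge0 => i _;
  [exact: sqr_ge0 | apply: sumr_ge0 => l _; exact: sqr_ge0].
Qed.

Theorem theorem4 (R : realType) (a b : nat) (W : 'M[R]_(a, b))
    (sigma : R -> R) :
  pos_homogeneous sigma ->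
  (exists t : R, sigma t != 0) ->
  Num.sqrt (DfI W) < 1 ->
  forall j : 'I_b,
    Num.sqrt ((1 - Num.sqrt (DfI W)) / (1 + Num.sqrt (DfI W)))
      <= activity_score sigma W j
    /\ activity_score sigma W j
      <= Num.sqrt ((1 + Num.sqrt (DfI W)) / (1 - Num.sqrt (DfI W))).
Proof.
move=> Hs [t st] eps1 j.
case: a W eps1 => [|a] W eps1.
  exfalso; have := diag_bound W j; rewrite big_ord0 sub0r normrN normr1 => H.
  by have := lt_le_trans eps1 H; rewrite ltxx.
set e := Num.sqrt (DfI W) in eps1 *.
have e0 : 0 <= e by exact: sqrtr_ge0.
set A := (`|sigma 1| + `|sigma (-1)|) / 2.
set Dr := fine (\int[normal_prob (0:R) 1]_v (`|v|)%:E)%E.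
have S0 : 0 < `|sigma 1| + `|sigma (-1)|.
  rewrite lt_def addr_ge0 ?andbT//; apply: contra st => /eqP.
  move/eqP; rewrite paddr_eq0 // !normr_eq0 => /andP[/eqP s1 /eqP s2].
  by rewrite (sigma_form sigma Hs) s1 s2 !mulr0 if_same.
have A0 : 0 < A by rewrite divr_gt0.
have Dr0 : 0 < Dr by rewrite fine_gt0// D_pos D_fin.
set Cr := A * Dr.
have Cr0 : 0 < Cr by rewrite mulr_gt0.
set rho := fun k : 'I_b => Num.sqrt (\sum_(i < a.+1) W i k ^+ 2).
have nk k : neuron_act sigma W k = (rho k * Cr)%:E by rewrite nact.
have e1 : 0 < 1 - e by rewrite subr_gt0.
set p := Num.sqrt (1 - e).
set q := Num.sqrt (1 + e).
have p0 : 0 < p by rewrite sqrtr_gt0.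
have q0 : 0 < q by rewrite sqrtr_gt0 ltr_wpDr.
have bnd k : p <= rho k <= q.
  have := diag_bound W k; rewrite ler_norml -/e => /andP[l u].
  by apply/andP; split; apply: ler_wsqrtr; lra.
have b0 : (0 < b)%N by exact: leq_ltn_trans (leq0n j) (ltn_ord j).
have bR : 0 < (b%:R : R) by rewrite ltr0n.
set S := \sum_(k < b) rho k.
have Sb : p * b%:R <= S <= q * b%:R.
  have Cp : \sum_(k < b) p = p * b%:R by rewrite sumr_const card_ord mulr_natr.
  have Cq : \sum_(k < b) q = q * b%:R by rewrite sumr_const card_ord mulr_natr.
  rewrite -Cp -Cq; apply/andP; split; apply: ler_sum => k _; by case/andP: (bnd k).
have SS0 : 0 < S by case/andP: Sb => + _; apply: lt_le_trans; rewrite mulr_gt0.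
have M0 : p <= S / b%:R <= q by rewrite ler_pdivlMr// ler_pdivrMr.
case/andP: M0 => pM Mq.
case/andP: (bnd j) => pj jq.
rewrite /activity_score nk /=.
under eq_bigr do rewrite nk /=.
rewrite -mulr_suml -/S.
have -> : rho j * Cr / (b%:R^-1 * (S * Cr)) = rho j / (S / b%:R).
  by field; rewrite !gt_eqF.
rewrite !sqrtrM ?sqrtrV ?subr_ge0 ?addr_ge0 ?(ltW eps1)// -/p -/q.
split.
- by apply: ratio_le => //; rewrite divr_gt0.
- by apply: ratio_le => //; apply: lt_le_trans pj.
Qed.
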